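(* Let $h\in R$. Then for every $i\ge1$, the binary representation of $h$ does not contain the string $1(10)^i0$ as a contiguous substring.
   Context: Stern's sequence $(a(n))_{n\ge0}$: $a(0)=0$, $a(1)=1$, $a(2n)=a(n)$, $a(2n+1)=a(n)+a(n+1)$; $s(n)=a(n+1)$ for $n\ge0$. $R$ is the set of record-setters of $s$, i.e. indices $v\ge0$ with $s(i)<s(v)$ for all $i<v$. The binary representation of a positive integer has no leading zeros; $0$ is represented by the string $0$. $x^i$ denotes $i$-fold concatenation of the string $x$. *)

(* Defs.v *)
From mathcomp Require Import all_boot.
Set Implicit Arguments. Unset Strict Implicit. Unset Printing Implicit Defensive.

Fixpoint stern_fuel (fuel n : nat) : nat :=
  match fuel with
  | 0 => 0
  | fuel'.+1 =>
      if n <= 1 then n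
      else if odd n then stern_fuel fuel' n./2 + stern_fuel fuel' n./2.+1
      else stern_fuel fuel' n./2
  end.

Definition stern (n : nat) : nat := stern_fuel n n.

Definition s (n : nat) : nat := stern n.+1.

Definition record_setter (v : nat) : Prop := forall i, i < v -> s i < s v.

(* binary representation, most significant bit first, true = 1;
   no leading zeros; 0 is represented by the string "0" *)
Fixpoint bin_aux (fuel n : nat) : seq bool :=
  match fuel with
  | 0 => [::]
  | fuel'.+1 => if n == 0 then [::] else rcons (bin_aux fuel' n./2) (odd n)
  end.

Definition bin (n : nat) : seq bool :=
  if n == 0 then [:: false] else bin_aux n n.

Definition spow (x : seq bool) (i : nat) : seq bool := flatten (nseq i x).

Lemma stern_check : [seq stern n | n <- iota 0 10] = [:: 0; 1; 1; 2; 1; 3; 2; 3; 1; 4].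
Proof. by []. Qed.
Lemma bin_check : [:: bin 0; bin 6; bin 11] = [:: [:: false]; [:: true; true; false]; [:: true; false; true; true]].
Proof. by []. Qed.

(* Main.v *)
Require Import Defs.
From mathcomp Require Import all_boot zify.

Lemma sf_eq f g n : n <= f -> n <= g -> stern_fuel f n = stern_fuel g n.
Proof.
elim: f g n => [|f IH] [|g] n //=; [ by case: n | by case: n | ].
move=> hf hg; case: ifP => // hn.
have h2 := odd_double_half n.
case: ifP => ho.
  rewrite (IH g) ?(IH g n./2.+1) //; rewrite ho in h2; lia.
rewrite (IH g) //; rewrite ho in h2; lia.
Qed.

Lemma sf_S f m : stern_fuel f.+1 m = if m <= 1 then m else if odd m then
  stern_fuel f m./2 + stern_fuel f m./2.+1 else stern_fuel f m./2.
Proof. by []. Qed.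

Lemma stern_unf n : 1 < n -> stern n =
  if odd n then stern n./2 + stern n./2.+1 else stern n./2.
Proof.
move=> h; rewrite /stern; case: n h => [|n] // h.
rewrite sf_S ifN; last by rewrite -ltnNge.
have h2 := odd_double_half n.+1.
case: ifP => ho; rewrite ho in h2.
  by rewrite (sf_eq n (n.+1./2) (n.+1./2)) 1?(sf_eq n (n.+1./2.+1) (n.+1./2.+1)) //; lia.
by rewrite (sf_eq n (n.+1./2) (n.+1./2)) //; lia.
Qed.

Lemma stern_double n : stern n.*2 = stern n.
Proof.
case: n => [|n] //; rewrite stern_unf ?odd_double ?doubleK //; lia.
Qed.

Lemma stern_doubleS n : stern n.*2.+1 = stern n + stern n.+1.
Proof.
case: n => [|n] //; rewrite stern_unf /= ?odd_double /= ?uphalf_double //; lia.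
Qed.

Definition stepP (pq : nat * nat) (b : bool) :=
  if b then (pq.1 + pq.2, pq.2) else (pq.1, pq.1 + pq.2).
Definition PP n := (stern n, stern n.+1).
Definition stepN (acc : nat) (b : bool) := acc.*2 + b.
Definition numf m l := foldl stepN m l.

Lemma P_step m b : PP (stepN m b) = stepP (PP m) b.
Proof.
rewrite /PP /stepN /stepP; case: b => /=.
  by rewrite addn1 stern_doubleS -doubleS stern_double.
by rewrite addn0 stern_double stern_doubleS.
Qed.

Lemma P_fold m l : PP (numf m l) = foldl stepP (PP m) l.
Proof. by elim: l m => [|b l IH] m //=; rewrite /numf /= -P_step IH. Qed.

Definition le2 (p q : nat * nat) := (p.1 <= q.1) && (p.2 <= q.2).

Lemma fold_mono l p q : le2 p q -> le2 (foldl stepP p l) (foldl stepP q l).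
Proof.
elim: l p q => [|b l IH] [p1 p2] [q1 q2] //= /andP [h1 h2]; apply: IH.
by move: h1 h2 => /= h1 h2; case: b; rewrite /le2 /stepP /=; apply/andP; split; lia.
Qed.

Lemma spowS x i : spow x i.+1 = x ++ spow x i.
Proof. by []. Qed.

Lemma Tform i : exists a b, forall p q,
  foldl stepP (p, q) (spow [:: true; false] i) = (a*p + b*q, b*p + (a+b)*q).
Proof.
elim: i => [|i [a [b IH]]].
  by exists 1, 0 => p q; rewrite /= mul1n mul0n addn0 add0n mul1n.
exists (a + b), (a + b + b) => p q.
rewrite spowS foldl_cat /= IH; congr pair; nia.
Qed.

Lemma key i pq : le2
  (foldl stepP pq ([:: true] ++ spow [:: true; false] i ++ [:: false]))
  (foldl stepP pq (spow [:: true; false] i.+1)).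
Proof.
case: pq => p q; have [a [b E]] := Tform i.
rewrite spowS !foldl_cat /= !E /le2 /=; apply/andP; split; nia.
Qed.

Lemma numf_bound m l : numf m l < m.+1 * 2 ^ size l.
Proof.
elim: l m => [|b l IH] m /=; first by rewrite expn0 muln1.
rewrite /numf /= -/(numf _ l); apply: (leq_trans (IH _)).
rewrite expnS /stepN; case: b => /=; nia.
Qed.

Lemma numf_split m l : numf m l = m * 2 ^ size l + numf 0 l.
Proof.
elim: l m => [|b l IH] m /=; first by rewrite /numf /= expn0 muln1 addn0.
rewrite /numf /= -/(numf (stepN m b) l) -/(numf (stepN 0 b) l) IH (IH (stepN 0 b)) expnS /stepN; nia.
Qed.

Lemma bin_aux_num f n : n <= f -> numf 0 (bin_aux f n) = n.
Proof.
elim: f n => [|f IH] n /=; first by rewrite leqn0 => /eqP ->.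
move=> hn; case: eqP => [->|hn0] //.
rewrite /numf foldl_rcons -/(numf 0 _) IH; last first.
  have := odd_double_half n; lia.
by rewrite /stepN addnC odd_double_half.
Qed.

Lemma bin_num h : numf 0 (bin h) = h.
Proof. rewrite /bin; case: eqP => [->|_] //; exact: bin_aux_num. Qed.

Lemma numf_cat m a b : numf m (a ++ b) = numf (numf m a) b.
Proof. exact: foldl_cat. Qed.

Lemma lt_lemma x y u w : size w = size u -> numf 0 w < numf 0 u ->
  numf 0 (x ++ w ++ y) < numf 0 (x ++ u ++ y).
Proof.
move=> sz lt; rewrite !numf_cat (numf_split (numf (numf 0 x) w))
  (numf_split (numf (numf 0 x) u)) ltn_add2r ltn_pmul2r ?expn_gt0 //.
by rewrite (numf_split _ w) (numf_split _ u) sz ltn_add2l.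
Qed.

Lemma wu_lt j : numf 0 (spow [:: true; false] j.+2) <
  numf 0 ([:: true] ++ spow [:: true; false] j.+1 ++ [:: false]).
Proof.
rewrite !spowS /= numf_cat (numf_split _ (spow _ _)) (numf_split (stepN _ _) (spow _ _)).
have := numf_bound 0 (spow [:: true; false] j).
rewrite /numf /= /stepN /=; nia.
Qed.

Lemma ctx_mono p x y u w : (forall q, le2 (foldl stepP q u) (foldl stepP q w)) ->
  le2 (foldl stepP p (x ++ u ++ y)) (foldl stepP p (x ++ w ++ y)).
Proof. by move=> H; rewrite !foldl_cat; apply: fold_mono. Qed.

Theorem mainTheorem4 (h : nat) :
  record_setter h ->
  forall i : nat, 1 <= i ->
    ~~ infix ([:: true] ++ spow [:: true; false] i ++ [:: false]) (bin h).
Proof.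
move=> hr i hi; apply/negP => /infixP [x [y hb]].
have hh : h = numf 0 (x ++ ([:: true] ++ spow [:: true; false] i ++ [:: false]) ++ y)
  by rewrite -hb bin_num.
set h' := numf 0 (x ++ spow [:: true; false] i.+1 ++ y).
have hlt : h' < h.
  rewrite hh; apply: lt_lemma.
    by rewrite spowS !size_cat /=; lia.
  case: i hi {hb hh h'} => [|j] // _; exact: wu_lt.
have := hr h' hlt; rewrite /s.
have : le2 (PP h) (PP h').
  rewrite hh /h' !P_fold; apply: ctx_mono; exact: key.
rewrite /le2 /PP /= => /andP [_ H1] H2; lia.
Qed.
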